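(* Let $\psi_{pl}:\mathbb{R}_{\geq 0}\to\mathbb{R}$ be a non-decreasing concave piecewise linear function with 2 or more (linear) pieces. Then $\psi_{pl}$ is not a neighbor function.
   Context: A neighbor function is a function $\psi:\mathbb{R}_{\geq 0}\to\mathbb{R}$ that is (i) strictly increasing, (ii) continuous, (iii) concave, and (iv) such that $g(x)=\psi(e^{x})$ is convex as a function of $x\in\mathbb{R}$. *)

(* Defs.v *)
(* concrete classical reals R. Functions R_{>=0} -> R are modelled
   as f : R -> R, with every property only constrained on [0, +oo). *)
From Stdlib Require Import Reals.
Open Scope R_scope.

Definition strictly_increasing_nonneg (f : R -> R) : Prop :=
  forall x y, 0 <= x -> x < y -> f x < f y.

Definition nondecreasing_nonneg (f : R -> R) : Prop :=
  forall x y, 0 <= x -> x <= y -> f x <= f y.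

Definition continuous_nonneg (f : R -> R) : Prop :=
  forall x, 0 <= x -> limit1_in f (fun y => 0 <= y) (f x) x.

Definition concave_nonneg (f : R -> R) : Prop :=
  forall x y t, 0 <= x -> 0 <= y -> 0 <= t <= 1 ->
    t * f x + (1 - t) * f y <= f (t * x + (1 - t) * y).

Definition convex_R (g : R -> R) : Prop :=
  forall x y t, 0 <= t <= 1 ->
    g (t * x + (1 - t) * y) <= t * g x + (1 - t) * g y.

Definition neighbor_function (psi : R -> R) : Prop :=
  strictly_increasing_nonneg psi /\ continuous_nonneg psi /\
  concave_nonneg psi /\ convex_R (fun x => psi (exp x)).

(* psi is piecewise linear on [0, +oo) with exactly k+1 linear pieces:
   breakpoints 0 = t 0 < t 1 < ... < t k, psi x = a i * x + b i on
   [t i, t (i+1)] for i < k and on [t k, +oo) for i = k, and consecutive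
   pieces have distinct slopes (so each breakpoint is a genuine one). *)
Definition piecewise_linear_pieces (psi : R -> R) (k : nat) : Prop :=
  exists (t a b : nat -> R),
    t 0%nat = 0 /\
    (forall i, (i < k)%nat -> t i < t (S i)) /\
    (forall i, (i < k)%nat -> forall x, t i <= x <= t (S i) -> psi x = a i * x + b i) /\
    (forall x, t k <= x -> psi x = a k * x + b k) /\
    (forall i, (i < k)%nat -> a i <> a (S i)).

(* Main.v *)
Require Import Defs.
From Stdlib Require Import Reals Lra Psatz Lia.
Open Scope R_scope.

Lemma key (psi : R -> R) t1 u a0 b0 a1 b1 :
  0 < t1 -> t1 < u ->
  (forall x, 0 <= x <= t1 -> psi x = a0 * x + b0) ->
  (forall x, t1 <= x <= u -> psi x = a1 * x + b1) ->
  a0 <> a1 ->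
  nondecreasing_nonneg psi -> concave_nonneg psi ->
  convex_R (fun x => psi (exp x)) -> False.
Proof.
  intros Ht1 Hu L0 L1 Hne Hnd Hcc Hcv.
  assert (E : a0 * t1 + b0 = a1 * t1 + b1).
  { rewrite <- L0 by lra. rewrite <- L1 by lra. reflexivity. }
  assert (Ha1 : 0 <= a1).
  { assert (H := Hnd t1 u ltac:(lra) ltac:(lra)).
    rewrite !L1 in H by lra. nra. }
  assert (Hle : a1 <= a0).
  { assert (H := Hcc 0 u (1 - t1 / u) ltac:(lra) ltac:(lra)).
    assert (Hq : 0 < t1 / u < 1).
    { split. apply Rdiv_lt_0_compat; lra.
      apply (Rmult_lt_reg_r u); [lra|]. unfold Rdiv. rewrite Rmult_assoc, Rinv_l by lra. lra. }
    specialize (H ltac:(lra)).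
    replace ((1 - t1 / u) * 0 + (1 - (1 - t1 / u)) * u) with t1 in H
      by (field; lra).
    rewrite (L0 0) in H by lra. rewrite (L1 u) in H by lra. rewrite (L0 t1) in H by lra.
    replace (1 - (1 - t1 / u)) with (t1/u) in H by ring.
    set (q := t1 / u) in *.
    assert (Hqu : q * u = t1) by (unfold q; field; lra).
    assert (Hb1 : b1 = a0 * t1 + b0 - a1 * t1) by lra.
    subst b1.
    assert (HH : (a1 - a0) * (t1 * (1 - q)) <= 0) by nra.
    assert (0 < t1 * (1 - q)) by nra.
    nra. }
  assert (Hlt : a1 < a0) by lra.
  set (g := (u - t1) / t1).
  set (f := (a0 - a1) / (a0 + 1)).
  assert (Hf : 0 < f < 1).
  { unfold f. split. apply Rdiv_lt_0_compat; lra.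
    apply (Rmult_lt_reg_r (a0+1)); [lra|]. unfold Rdiv. rewrite Rmult_assoc, Rinv_l by lra. lra. }
  assert (Hg : 0 < g) by (apply Rdiv_lt_0_compat; lra).
  assert (Hgt : g * t1 = u - t1) by (unfold g; field; lra).
  assert (Hfa : f * (a0 + 1) = a0 - a1) by (unfold f; field; lra).
  set (d := g * f / (1 + g)).
  assert (Hdd : d * (1 + g) = g * f) by (unfold d; field; lra).
  assert (Hd : 0 < d) by (unfold d; apply Rdiv_lt_0_compat; nra).
  assert (Hdg : d <= g) by nra.
  assert (Hdf : d <= f) by nra.
  assert (Hdu : t1 * (1 + d) <= u) by nra.
  assert (Hda : a1 * d < a0 - a1) by nra.
  set (c := 1 + d).
  assert (Hc : 1 < c) by (unfold c; lra).
  set (w := t1 / c).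
  assert (Hw : w * c = t1) by (unfold w; field; lra).
  assert (Hw0 : 0 < w) by (unfold w; apply Rdiv_lt_0_compat; lra).
  assert (H := Hcv (ln w) (ln (t1 * c)) (1/2) ltac:(lra)).
  simpl in H.
  replace (1 / 2 * ln w + (1 - 1 / 2) * ln (t1 * c)) with (ln t1) in H.
  2:{ rewrite <- Hw. rewrite (ln_mult (w * c) c) by nra. rewrite (ln_mult w c) by lra. field. }
  rewrite !exp_ln in H by nra.
  rewrite (L0 w) in H by nra. rewrite (L1 (t1 * c)) in H by (unfold c in *; nra).
  rewrite (L1 t1) in H by lra.
  assert (Hb0 : b0 = a1 * t1 + b1 - a0 * t1) by lra.
  rewrite Hb0 in H. rewrite <- Hw in H.
  assert (HH : 0 <= (w * (c - 1)) * (a1 * c - a0)) by nra.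
  assert (0 < w * (c - 1)) by nra.
  assert (a1 * c >= a0) by nra.
  unfold c in *. nra.
Qed.

Theorem theoremF1 (psi : R -> R) (k : nat) :
  nondecreasing_nonneg psi ->
  concave_nonneg psi ->
  piecewise_linear_pieces psi k ->
  (1 <= k)%nat ->
  ~ neighbor_function psi.
Proof.
  intros Hnd Hcc [t [a [b [T0 [Tinc [Lin [Last Sl]]]]]]] Hk [_ [_ [_ Hcv]]].
  assert (Ht1 : 0 < t 1%nat) by (rewrite <- T0; apply Tinc; lia).
  destruct (Nat.eq_dec k 1) as [->|Hk2].
  - apply (key psi (t 1%nat) (t 1%nat + 1) (a 0%nat) (b 0%nat) (a 1%nat) (b 1%nat)).
    + exact Ht1.
    + lra.
    + intros x Hx. apply Lin; [lia|]. rewrite T0; lra.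
    + intros x Hx. apply Last. lra.
    + apply Sl; lia.
    + exact Hnd.
    + exact Hcc.
    + exact Hcv.
  - apply (key psi (t 1%nat) (t 2%nat) (a 0%nat) (b 0%nat) (a 1%nat) (b 1%nat)).
    + exact Ht1.
    + apply Tinc; lia.
    + intros x Hx. apply Lin; [lia|]. rewrite T0; lra.
    + intros x Hx. apply Lin; [lia|]. lra.
    + apply Sl; lia.
    + exact Hnd.
    + exact Hcc.
    + exact Hcv.
Qed.
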